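(* Let $K$ be a totally ordered quasi-field of characteristic $1$ and let $P,Q\in K\{X_1,\dots,X_n\}$. If there exists an integer $m>0$ with $P^m=Q^m$, then $P=Q$.
   Context: A quasi-field of characteristic $1$ is a commutative semiring $K$ with $1+1=1$ in which every nonzero element is multiplicatively invertible; ordered by $u\le v$ iff $u+v=v$, totally ordered meaning the order is total. $K\{X_1,\dots,X_n\}$ is the image of $K[X_1,\dots,X_n]$ in its quasi-field of fractions, i.e. the quotient by $P\sim Q$ iff $RP=RQ$ for some nonzero $R$; it is a cancellative commutative semiring of characteristic $1$. *)

(* Defs.v *)
(* Multivariate polynomials are not in the library, so we
   build K[X_1..X_n] by hand: a polynomial is a finite list of terms
   (monomial, coefficient); its value is its coefficient function. *)
From HB Require Import structures.
From mathcomp Require Import all_boot all_order all_algebra.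
Set Implicit Arguments. Unset Strict Implicit. Unset Printing Implicit Defensive.
Import GRing.Theory.
Local Open Scope ring_scope.

Definition char1 (K : comNzSemiRingType) : Prop := (1 + 1 : K) = 1.
Definition quasi_field (K : comNzSemiRingType) : Prop :=
  forall x : K, x <> 0 -> exists y : K, x * y = 1.
Definition qle (K : comNzSemiRingType) (u v : K) : Prop := u + v = v.
Definition totally_ordered (K : comNzSemiRingType) : Prop :=
  forall u v : K, qle u v \/ qle v u.

Definition mono (n : nat) := {ffun 'I_n -> nat}.
Definition mono0 (n : nat) : mono n := [ffun _ => 0%N].
Definition monoM (n : nat) (a b : mono n) : mono n := [ffun i => (a i + b i)%N].

Definition mpoly (K : comNzSemiRingType) (n : nat) := seq (mono n * K).
Definition coef (K : comNzSemiRingType) (n : nat) (p : mpoly K n) (a : mono n) : K :=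
  \sum_(t <- p | t.1 == a) t.2.
Definition mpoly_eq (K : comNzSemiRingType) (n : nat) (p q : mpoly K n) : Prop :=
  forall a, coef p a = coef q a.
Definition mpoly_nonzero (K : comNzSemiRingType) (n : nat) (p : mpoly K n) : Prop :=
  exists a, coef p a <> 0.
Definition mpoly1 (K : comNzSemiRingType) (n : nat) : mpoly K n := [:: (mono0 n, 1)].
Definition mpolyM (K : comNzSemiRingType) (n : nat) (p q : mpoly K n) : mpoly K n :=
  [seq (monoM t.1 u.1, t.2 * u.2) | t <- p, u <- q].
Definition mpolyX (K : comNzSemiRingType) (n : nat) (p : mpoly K n) (m : nat) : mpoly K n :=
  iter m (mpolyM p) (mpoly1 K n).

(* equality in K{X_1..X_n}: P ~ Q iff R P = R Q in K[X] for some nonzero R *)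
Definition frac_eq (K : comNzSemiRingType) (n : nat) (p q : mpoly K n) : Prop :=
  exists r : mpoly K n, mpoly_nonzero r /\ mpoly_eq (mpolyM r p) (mpolyM r q).

(* Main.v *)
From HB Require Import structures.
Require Import Defs.
From mathcomp Require Import all_boot all_order all_algebra.
From Stdlib Require Import Classical.
Set Implicit Arguments. Unset Strict Implicit. Unset Printing Implicit Defensive.
Import GRing.Theory.
Local Open Scope ring_scope.

Definition Iv (K : comNzSemiRingType) n (p : mpoly K n) (g : mono n -> K) : K :=
  \sum_(t <- p) t.2 * g t.1.
Definition dl (K : comNzSemiRingType) n (a : mono n) : mono n -> K :=
  fun b => (b == a)%:R.

Lemma coefE (K : comNzSemiRingType) n (p : mpoly K n) a : coef p a = Iv p (dl K a).
Proof.
rewrite /coef /Iv big_mkcond; apply: eq_bigr => t _; rewrite /dl.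
by case: eqP => _; rewrite ?mulr1 ?mulr0.
Qed.

Lemma coef_cons (K : comNzSemiRingType) n (t : mono n * K) p b :
  coef (t :: p) b = (if t.1 == b then t.2 else 0) + coef p b.
Proof. by rewrite /coef big_cons; case: eqP; rewrite ?add0r. Qed.

Lemma Iv_supp (K : comNzSemiRingType) n (p : mpoly K n) g (s : seq (mono n)) :
  uniq s -> {subset map fst p <= s} -> Iv p g = \sum_(b <- s) coef p b * g b.
Proof.
move=> us; elim: p => [|t p IH] sub.
  by rewrite /Iv big_nil big1 // => b _; rewrite /coef big_nil mul0r.
have st : t.1 \in s by apply: sub; rewrite inE eqxx.
rewrite /Iv big_cons -/(Iv p g) IH; last by move=> x hx; apply: sub; rewrite inE hx orbT.
under [RHS]eq_bigr => b _ do rewrite coef_cons mulrDl.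
rewrite big_split /=; congr (_ + _).
rewrite (bigD1_seq t.1) //= eqxx big1 ?addr0 // => b hb.
by rewrite eq_sym (negbTE hb) mul0r.
Qed.

Lemma Iv_eq (K : comNzSemiRingType) n (p q : mpoly K n) :
  mpoly_eq p q -> forall g, Iv p g = Iv q g.
Proof.
move=> h g; set s := undup (map fst p ++ map fst q).
rewrite (@Iv_supp _ _ p g s) ?undup_uniq //; last by move=> x hx; rewrite mem_undup mem_cat hx.
rewrite (@Iv_supp _ _ q g s) ?undup_uniq //; last by move=> x hx; rewrite mem_undup mem_cat hx orbT.
by apply: eq_bigr => b _; rewrite h.
Qed.

Lemma meqP (K : comNzSemiRingType) n (p q : mpoly K n) :
  (forall g, Iv p g = Iv q g) -> mpoly_eq p q.
Proof. by move=> h a; rewrite !coefE h. Qed.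

Lemma Iv_mul (K : comNzSemiRingType) n (p q : mpoly K n) g :
  Iv (mpolyM p q) g = Iv p (fun b => Iv q (fun c => g (monoM b c))).
Proof.
rewrite /Iv /mpolyM big_allpairs_dep; apply: eq_bigr => t _.
by rewrite mulr_sumr; apply: eq_bigr => u _; rewrite mulrA.
Qed.

Lemma Iv_cat (K : comNzSemiRingType) n (p q : mpoly K n) g :
  Iv (p ++ q) g = Iv p g + Iv q g.
Proof. by rewrite /Iv big_cat. Qed.

Lemma Iv_1 (K : comNzSemiRingType) n g : Iv (mpoly1 K n) g = g (mono0 n).
Proof. by rewrite /Iv big_cons big_nil mul1r addr0. Qed.

Lemma Iv_exch (K : comNzSemiRingType) n (p q : mpoly K n) h :
  Iv p (fun b => Iv q (h b)) = Iv q (fun c => Iv p (fun b => h b c)).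
Proof.
rewrite /Iv; under eq_bigr do rewrite mulr_sumr.
under [RHS]eq_bigr do rewrite mulr_sumr.
rewrite exchange_big /=; apply: eq_bigr => u _; apply: eq_bigr => t _.
by rewrite mulrCA.
Qed.

Lemma monoMC n (a b : mono n) : monoM a b = monoM b a.
Proof. by apply/ffunP => i; rewrite !ffunE addnC. Qed.
Lemma monoMA n (a b c : mono n) : monoM a (monoM b c) = monoM (monoM a b) c.
Proof. by apply/ffunP => i; rewrite !ffunE addnA. Qed.
Lemma mono0M n (a : mono n) : monoM (mono0 n) a = a.
Proof. by apply/ffunP => i; rewrite !ffunE add0n. Qed.

Notation meq := mpoly_eq.

Lemma meq_refl (K : comNzSemiRingType) n (p : mpoly K n) : meq p p.
Proof. by []. Qed.
Lemma meq_sym (K : comNzSemiRingType) n (p q : mpoly K n) : meq p q -> meq q p.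
Proof. by move=> h a. Qed.
Lemma meq_trans (K : comNzSemiRingType) n (p q r : mpoly K n) : meq p q -> meq q r -> meq p r.
Proof. by move=> h1 h2 a; rewrite h1. Qed.

Lemma Iv_ext (K : comNzSemiRingType) n (p : mpoly K n) f f' :
  (forall b, f b = f' b) -> Iv p f = Iv p f'.
Proof. by move=> h; apply: eq_bigr => t _; rewrite h. Qed.

Lemma meq_mul (K : comNzSemiRingType) n (p p' q q' : mpoly K n) :
  meq p p' -> meq q q' -> meq (mpolyM p q) (mpolyM p' q').
Proof.
move=> hp hq; apply: meqP => g; rewrite !Iv_mul (Iv_eq hp).
by apply: Iv_ext => b; rewrite (Iv_eq hq).
Qed.

Lemma meq_cat (K : comNzSemiRingType) n (p p' q q' : mpoly K n) :
  meq p p' -> meq q q' -> meq (p ++ q) (p' ++ q').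
Proof. by move=> hp hq; apply: meqP => g; rewrite !Iv_cat (Iv_eq hp) (Iv_eq hq). Qed.

Lemma meq_mulC (K : comNzSemiRingType) n (p q : mpoly K n) : meq (mpolyM p q) (mpolyM q p).
Proof.
apply: meqP => g; rewrite !Iv_mul Iv_exch; apply: Iv_ext => u.
by apply: Iv_ext => t; rewrite monoMC.
Qed.

Lemma meq_mulA (K : comNzSemiRingType) n (p q r : mpoly K n) :
  meq (mpolyM p (mpolyM q r)) (mpolyM (mpolyM p q) r).
Proof.
apply: meqP => g; rewrite !Iv_mul; apply: Iv_ext => t.
rewrite Iv_mul; apply: Iv_ext => u; apply: Iv_ext => v.
by rewrite monoMA.
Qed.

Lemma meq_mul1 (K : comNzSemiRingType) n (p : mpoly K n) : meq (mpolyM (mpoly1 K n) p) p.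
Proof.
apply: meqP => g; rewrite Iv_mul Iv_1; apply: Iv_ext => t.
by rewrite mono0M.
Qed.

Lemma meq_mulDl (K : comNzSemiRingType) n (p q r : mpoly K n) :
  meq (mpolyM (p ++ q) r) (mpolyM p r ++ mpolyM q r).
Proof. by apply: meqP => g; rewrite Iv_cat !Iv_mul Iv_cat. Qed.

Lemma meq_catC (K : comNzSemiRingType) n (p q : mpoly K n) : meq (p ++ q) (q ++ p).
Proof. by apply: meqP => g; rewrite !Iv_cat addrC. Qed.

Lemma meq_catA (K : comNzSemiRingType) n (p q r : mpoly K n) : meq (p ++ (q ++ r)) ((p ++ q) ++ r).
Proof. by rewrite catA. Qed.

Lemma char1_idem (K : comNzSemiRingType) (h : char1 K) (x : K) : x + x = x.
Proof. by rewrite -{1 2}(mulr1 x) -mulrDr h mulr1. Qed.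

Lemma meq_catI (K : comNzSemiRingType) n (h : char1 K) (p : mpoly K n) : meq (p ++ p) p.
Proof. by apply: meqP => g; rewrite Iv_cat char1_idem. Qed.

Lemma zsf (K : comNzSemiRingType) (h : char1 K) (a b : K) : a + b = 0 -> a = 0.
Proof. by move=> e; rewrite -[a](addr0) -e addrA char1_idem. Qed.

Lemma nzd (K : comNzSemiRingType) (hq : quasi_field K) (x y : K) : x <> 0 -> x * y = 0 -> y = 0.
Proof.
move=> hx e; have [z hz] := hq x hx.
by rewrite -[y]mul1r -hz [x * z]mulrC -mulrA e mulr0.
Qed.

Lemma Iv_zsf (K : comNzSemiRingType) n (h : char1 K) (p : mpoly K n) g :
  Iv p g = 0 -> forall t, t \in p -> t.2 * g t.1 = 0.
Proof.
elim: p => [|u p IH] //= e t; rewrite /Iv big_cons -/(Iv p g) in e.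
have e1 := zsf h e; rewrite addrC in e; have e2 := zsf h e.
by rewrite inE => /orP [/eqP -> | ht] //; apply: IH.
Qed.

Lemma nz_witness (K : comNzSemiRingType) n (p : mpoly K n) :
  mpoly_nonzero p -> exists2 t, t \in p & t.2 != 0.
Proof.
move=> [a ha]; case: (boolP (has (fun t => t.2 != 0) p)) => [/hasP //|].
move=> /hasPn hn; case: ha; rewrite /coef big1_seq // => t /andP [_ ht].
by have := hn t ht; rewrite negbK => /eqP.
Qed.

Lemma nz_mul (K : comNzSemiRingType) n (h : char1 K) (hq : quasi_field K) (r s : mpoly K n) :
  mpoly_nonzero r -> mpoly_nonzero s -> mpoly_nonzero (mpolyM r s).
Proof.
move=> /nz_witness [t tr t0] /nz_witness [u us u0].
exists (monoM t.1 u.1); rewrite coefE Iv_mul => e.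
have := Iv_zsf h e tr => /(nzd hq (elimN eqP t0)) e2.
have := Iv_zsf h e2 us; rewrite /dl eqxx mulr1 => e3.
by rewrite e3 eqxx in u0.
Qed.

Lemma nz1 (K : comNzSemiRingType) n : mpoly_nonzero (mpoly1 K n).
Proof.
exists (mono0 n); rewrite /coef big_cons big_nil eqxx addr0.
by apply/eqP; exact: oner_neq0.
Qed.

Lemma nz_meq (K : comNzSemiRingType) n (p q : mpoly K n) :
  meq p q -> mpoly_nonzero p -> mpoly_nonzero q.
Proof. by move=> e [a ha]; exists a; rewrite -e. Qed.

Notation E := frac_eq.

Lemma E_refl (K : comNzSemiRingType) n (p : mpoly K n) : E p p.
Proof. by exists (mpoly1 K n); split; [apply: nz1|]. Qed.
Lemma E_sym (K : comNzSemiRingType) n (p q : mpoly K n) : E p q -> E q p.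
Proof. by move=> [r [hr e]]; exists r; split=> // a; rewrite e. Qed.
Lemma E_trans (K : comNzSemiRingType) n (h : char1 K) (hq : quasi_field K) (p q s : mpoly K n) :
  E p q -> E q s -> E p s.
Proof.
move=> [r1 [h1 e1]] [r2 [h2 e2]]; exists (mpolyM r1 r2); split; first exact: nz_mul.
apply: meq_trans (meq_sym (meq_mulA _ _ _)) _.
apply: meq_trans (meq_mul (meq_refl _) (meq_mulC _ _)) _.
apply: meq_trans (meq_mulA _ _ _) _.
apply: meq_trans (meq_mul e1 (meq_refl _)) _.
apply: meq_trans (meq_mulC _ _) _.
apply: meq_trans (meq_mulA _ _ _) _.
apply: meq_trans (meq_mul (meq_mulC _ _) (meq_refl _)) _.
apply: meq_trans (meq_sym (meq_mulA _ _ _)) _.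
apply: meq_trans (meq_mul (meq_refl _) e2) _.
exact: meq_mulA.
Qed.

Lemma E_meq (K : comNzSemiRingType) n (p q : mpoly K n) : meq p q -> E p q.
Proof. by move=> e; exists (mpoly1 K n); split; [apply: nz1| apply: meq_mul]. Qed.

Lemma E_mul (K : comNzSemiRingType) n (h : char1 K) (hq : quasi_field K) (p p' q q' : mpoly K n) :
  E p p' -> E q q' -> E (mpolyM p q) (mpolyM p' q').
Proof.
move=> [r1 [h1 e1]] [r2 [h2 e2]]; exists (mpolyM r1 r2); split; first exact: nz_mul.
have key : forall a b c d : mpoly K n,
  meq (mpolyM (mpolyM a b) (mpolyM c d)) (mpolyM (mpolyM a c) (mpolyM b d)).
  move=> a b c d.
  apply: meq_trans (meq_sym (meq_mulA _ _ _)) _.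
  apply: meq_trans (meq_mul (meq_refl _) (meq_mulA _ _ _)) _.
  apply: meq_trans (meq_mul (meq_refl _) (meq_mul (meq_mulC _ _) (meq_refl _))) _.
  apply: meq_trans (meq_mul (meq_refl _) (meq_sym (meq_mulA _ _ _))) _.
  exact: meq_mulA.
apply: meq_trans (key _ _ _ _) _.
apply: meq_trans (meq_mul e1 e2) _.
exact: meq_sym (key _ _ _ _).
Qed.

Lemma meq_mulDr (K : comNzSemiRingType) n (p q r : mpoly K n) :
  meq (mpolyM r (p ++ q)) (mpolyM r p ++ mpolyM r q).
Proof.
apply: meq_trans (meq_mulC _ _) _.
apply: meq_trans (meq_mulDl _ _ _) _.
exact: meq_cat (meq_mulC _ _) (meq_mulC _ _).
Qed.

Lemma E_cat (K : comNzSemiRingType) n (h : char1 K) (hq : quasi_field K) (p p' q q' : mpoly K n) :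
  E p p' -> E q q' -> E (p ++ q) (p' ++ q').
Proof.
move=> [r1 [h1 e1]] [r2 [h2 e2]]; exists (mpolyM r1 r2); split; first exact: nz_mul.
apply: meq_trans (meq_mulDr _ _ _) _.
apply: meq_trans _ (meq_sym (meq_mulDr _ _ _)).
apply: meq_cat.
- apply: meq_trans (meq_mul (meq_mulC _ _) (meq_refl _)) _.
  apply: meq_trans (meq_sym (meq_mulA _ _ _)) _.
  apply: meq_trans (meq_mul (meq_refl _) e1) _.
  apply: meq_trans (meq_mulA _ _ _) _.
  exact: meq_mul (meq_mulC _ _) (meq_refl _).
- apply: meq_trans (meq_sym (meq_mulA _ _ _)) _.
  apply: meq_trans (meq_mul (meq_refl _) e2) _.
  exact: meq_mulA.
Qed.

Lemma E_cancel (K : comNzSemiRingType) n (h : char1 K) (hq : quasi_field K) (c p q : mpoly K n) :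
  mpoly_nonzero c -> E (mpolyM c p) (mpolyM c q) -> E p q.
Proof.
move=> hc [r [hr e]]; exists (mpolyM r c); split; first exact: nz_mul.
apply: meq_trans (meq_sym (meq_mulA _ _ _)) _.
apply: meq_trans e _.
exact: meq_mulA.
Qed.

Definition le (K : comNzSemiRingType) n (a b : mpoly K n) := E (a ++ b) b.

Lemma le_compat (K : comNzSemiRingType) n (h : char1 K) (hq : quasi_field K) (a b a' b' : mpoly K n) :
  E a a' -> E b b' -> le a b -> le a' b'.
Proof.
move=> ea eb l; rewrite /le in l *.
apply: (E_trans h hq (E_cat h hq (E_sym ea) (E_sym eb))).
exact: (E_trans h hq l eb).
Qed.

Lemma le_refl (K : comNzSemiRingType) n (h : char1 K) (a : mpoly K n) : le a a.
Proof. exact: E_meq (meq_catI h a). Qed.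

Lemma le_trans (K : comNzSemiRingType) n (h : char1 K) (hq : quasi_field K) (a b c : mpoly K n) :
  le a b -> le b c -> le a c.
Proof.
move=> l1 l2; rewrite /le in l1 l2 *.
apply: (E_trans h hq (E_cat h hq (E_refl a) (E_sym l2))).
apply: (E_trans h hq (E_meq (meq_catA _ _ _))).
apply: (E_trans h hq (E_cat h hq l1 (E_refl c))).
exact: l2.
Qed.

Lemma le_addl (K : comNzSemiRingType) n (h : char1 K) (a b : mpoly K n) : le a (a ++ b).
Proof. by apply: E_meq; apply: meqP => g; rewrite !Iv_cat addrA (char1_idem h). Qed.

Lemma le_addr (K : comNzSemiRingType) n (h : char1 K) (a b : mpoly K n) : le b (a ++ b).
Proof.
by apply: E_meq; apply: meqP => g; rewrite !Iv_cat addrCA (char1_idem h).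
Qed.

Lemma le_add (K : comNzSemiRingType) n (h : char1 K) (hq : quasi_field K) (a b c : mpoly K n) :
  le a c -> le b c -> le (a ++ b) c.
Proof.
move=> l1 l2; rewrite /le in l1 l2 *.
apply: (E_trans h hq (E_meq (meq_sym (meq_catA _ _ _)))).
apply: (E_trans h hq (E_cat h hq (E_refl a) l2)).
exact: l1.
Qed.

Lemma le_E (K : comNzSemiRingType) n (h : char1 K) (hq : quasi_field K) (a b : mpoly K n) :
  E a b -> le a b.
Proof. by move=> e; exact: (le_compat h hq (E_refl a) e (le_refl h a)). Qed.

Lemma le_antisym (K : comNzSemiRingType) n (h : char1 K) (hq : quasi_field K) (a b : mpoly K n) :
  le a b -> le b a -> E a b.
Proof.
move=> l1 l2; apply: (E_trans h hq (E_sym l2)).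
exact: (E_trans h hq (E_meq (meq_catC _ _)) l1).
Qed.

Lemma le_mull (K : comNzSemiRingType) n (h : char1 K) (hq : quasi_field K) (a b c : mpoly K n) :
  le a b -> le (mpolyM c a) (mpolyM c b).
Proof.
move=> l; rewrite /le in l *.
apply: (E_trans h hq (E_meq (meq_sym (meq_mulDr _ _ _)))).
exact: (E_mul h hq (E_refl c) l).
Qed.

Lemma le_mulr (K : comNzSemiRingType) n (h : char1 K) (hq : quasi_field K) (a b c : mpoly K n) :
  le a b -> le (mpolyM a c) (mpolyM b c).
Proof.
move=> l; apply: (le_compat h hq (E_meq (meq_mulC _ _)) (E_meq (meq_mulC _ _))).
exact: (le_mull h hq c l).
Qed.

Lemma pw_mono (K : comNzSemiRingType) n (h : char1 K) (hq : quasi_field K) (a b : mpoly K n) k :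
  le a b -> le (mpolyX a k) (mpolyX b k).
Proof.
move=> l; elim: k => [|k IH]; first exact: le_refl.
rewrite /mpolyX !iterS -!/(mpolyX _ _).
apply: (le_trans h hq (le_mull h hq a IH)).
exact: (le_mulr h hq (mpolyX b k) l).
Qed.

Lemma pw_nz (K : comNzSemiRingType) n (h : char1 K) (hq : quasi_field K) (a : mpoly K n) k :
  mpoly_nonzero a -> mpoly_nonzero (mpolyX a k).
Proof.
move=> ha; elim: k => [|k IH]; first exact: nz1.
by rewrite /mpolyX iterS -/(mpolyX _ _); apply: nz_mul.
Qed.

Lemma keyC (K : comNzSemiRingType) n (h : char1 K) (hq : quasi_field K) (x y : mpoly K n) j :
  le (mpolyM (mpolyX (x ++ y) j) y) (mpolyM (mpolyX (x ++ y) j) x ++ mpolyX y j.+1).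
Proof.
set S := x ++ y.
have yS : le y S by exact: le_addr.
elim: j => [|j IH].
  apply: (le_compat h hq (E_sym (E_meq (meq_mul1 y)))).
    apply: (E_cat h hq (E_sym (E_meq (meq_mul1 x)))).
    exact: (E_sym (E_meq (meq_trans (meq_mulC _ _) (meq_mul1 y)))).
  exact: le_addr.
rewrite /mpolyX !iterS -!/(mpolyX _ _).
set A := mpolyM (mpolyM S (mpolyX S j)) x.
set V := mpolyX y j.+1.
have step1 : le (mpolyM (mpolyM S (mpolyX S j)) y)
                 (mpolyM S (mpolyM (mpolyX S j) x ++ V)).
  apply: (le_compat h hq (E_meq (meq_mulA _ _ _)) (E_refl _)).
  exact: (le_mull h hq S IH).
have step2 : E (mpolyM S (mpolyM (mpolyX S j) x ++ V)) (A ++ (mpolyM x V ++ mpolyM y V)).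
  apply: E_meq; apply: meq_trans (meq_mulDr _ _ _) _.
  apply: meq_cat; first exact: meq_mulA.
  exact: meq_mulDl.
apply: (le_trans h hq step1); apply: (le_compat h hq (E_sym step2) (E_refl _)).
apply: (le_add h hq (le_addl h _ _)).
apply: (le_add h hq _ (le_addr h _ _)).
apply: (le_trans h hq _ (le_addl h A (mpolyM y V))).
apply: (le_compat h hq (E_meq (meq_mulC _ _)) (E_refl _)).
exact: (le_mulr h hq x (pw_mono h hq j.+1 yS)).
Qed.

Lemma half (K : comNzSemiRingType) n (h : char1 K) (hq : quasi_field K) (x y : mpoly K n) k :
  E (mpolyX x k.+1) (mpolyX y k.+1) -> mpoly_nonzero (x ++ y) -> E (x ++ y) x.
Proof.
move=> hxy hnz; set S := x ++ y.
have xS : le x S by exact: le_addl.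
set T := mpolyX S k.
have D : le (mpolyM T y) (mpolyM T x).
  apply: (le_trans h hq (keyC h hq x y k)).
  apply: (le_add h hq (le_refl h _)).
  apply: (le_compat h hq hxy (E_refl _)).
  rewrite /mpolyX iterS -/(mpolyX _ _).
  apply: (le_compat h hq (E_meq (meq_mulC _ _)) (E_refl _)).
  exact: (le_mulr h hq x (pw_mono h hq k xS)).
apply: (E_cancel h hq (pw_nz h hq k hnz)).
apply: (E_trans h hq (E_meq (meq_mulDr _ _ _))).
apply: (le_antisym h hq).
  exact: (le_add h hq (le_refl h _) D).
exact: le_addl.
Qed.

Theorem lemma3p9 (K : comNzSemiRingType) (n : nat)
  (hchar : char1 K) (hqf : quasi_field K) (htot : totally_ordered K)
  (P Q : mpoly K n) (m : nat) (hm : (0 < m)%N)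
  (hPQ : frac_eq (mpolyX P m) (mpolyX Q m)) :
  frac_eq P Q.
Proof.
case: m hm hPQ => [//|k] _ hPQ.
case: (classic (mpoly_nonzero (P ++ Q))) => [hnz | hz].
  have e1 := half hchar hqf hPQ hnz.
  have e2 := half hchar hqf (E_sym hPQ) (nz_meq (meq_catC _ _) hnz).
  apply: (E_trans hchar hqf (E_sym e1)).
  apply: (E_trans hchar hqf (E_meq (meq_catC _ _))).
  exact: e2.
apply: E_meq => a.
have z : coef (P ++ Q) a = 0.
  case: (coef (P ++ Q) a =P 0) => // ne; case: hz.
  by exists a.
rewrite !coefE Iv_cat -!coefE in z.
have zP := zsf hchar z; rewrite addrC in z; have zQ := zsf hchar z.
by rewrite zP zQ.
Qed.
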